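(* Let $G$ be a finite group with $Z(G)=I$, and suppose there is an integer $n_0\ge 3$ such that $l^i(D_1,\dots,D_n)\ge1$ for all class vectors $(D_1,\dots,D_n)$ of $G$ of length $n\in\{n_0,n_0+1,\dots,2n_0-1\}$. Then the set of class vectors $(C_1,\dots,C_m)$ of $G$ (of any length $m$) with $l^i(C_1,\dots,C_m)=0$ is finite, and $\lim_{m\to\infty}l^i(C_1,\dots,C_m)=\infty$, i.e. for every sequence of class vectors of $G$ whose lengths $m$ tend to infinity, the values $l^i(C_1,\dots,C_m)$ tend to infinity.
   Context: $I$ is the trivial group and $\iota$ the identity. A class vector of length $k$ is a tuple of $k$ non-trivial conjugacy classes of $G$. $\Sigma^i(C_1,\dots,C_k)$ is the set of $G$-conjugacy classes (simultaneous conjugation) of tuples $(\sigma_1,\dots,\sigma_k)$ with $\sigma_j\in C_j$, $\langle\sigma_1,\dots,\sigma_k\rangle=G$, $\sigma_1\cdots\sigma_k=\iota$, and $l^i(C_1,\dots,C_k)=|\Sigma^i(C_1,\dots,C_k)|$. *)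

(* Defs.v *)
From mathcomp Require Import all_boot all_fingroup all_solvable.
Set Implicit Arguments. Unset Strict Implicit. Unset Printing Implicit Defensive.
Local Open Scope group_scope.

Section Defs.
Variable gT : finGroupType.

Definition class_vector (G : {group gT}) (s : seq {set gT}) : bool :=
  all (fun C => (C \in classes G) && (C != [1 gT])) s.

Definition Ei (G : {group gT}) (s : seq {set gT}) : {set {ffun 'I_(size s) -> gT}} :=
  [set sg : {ffun 'I_(size s) -> gT} |
     [&& [forall j, sg j \in nth set0 s j],
         << [set sg j | j : 'I_(size s)] >> == G
       & \prod_(j < size s) sg j == 1]].

Definition tconj k (sg : {ffun 'I_k -> gT}) (g : gT) : {ffun 'I_k -> gT} :=
  [ffun j => sg j ^ g].

Definition Sigma_i (G : {group gT}) (s : seq {set gT}) :=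
  [set [set tconj sg g | g in G] | sg in Ei G s].

Definition l_i (G : {group gT}) (s : seq {set gT}) : nat := #|Sigma_i G s|.

End Defs.

(* Main.v *)
Require Import Defs.
From mathcomp Require Import all_boot all_fingroup all_solvable.
From mathcomp Require Import zify.
Local Open Scope group_scope.
Section Helpers.
Set Implicit Arguments. Unset Strict Implicit.

Section S.
Variables (gT : finGroupType) (G : {group gT}).

Definition good (s : seq {set gT}) (t : seq gT) :=
  [/\ size t = size s,
      forall i, (i < size s)%N -> nth 1 t i \in nth set0 s i,
      <<[set x in t]>> = G & \prod_(x <- t) x = 1].

Lemma good_cat s1 s2 t1 t2 : good s1 t1 -> good s2 t2 -> good (s1 ++ s2) (t1 ++ t2).
Proof.
case=> e1 m1 g1 p1 [e2 m2 g2 p2]; split.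
- by rewrite !size_cat e1 e2.
- move=> i; rewrite size_cat !nth_cat e1.
  case: (ltnP i (size s1)) => Hi Hi2; first exact: m1.
  by apply: m2; rewrite ltn_subLR.
- apply/eqP; rewrite eqEsubset; apply/andP; split.
    rewrite gen_subG; apply/subsetP=> x; rewrite inE mem_cat => /orP[] Hx.
      by rewrite -g1 mem_gen // inE.
    by rewrite -g2 mem_gen // inE.
  rewrite -{1}g1; apply: genS; apply/subsetP=> x; rewrite !inE mem_cat => ->; done.
- by rewrite big_cat /= p1 p2 mulg1.
Qed.

Lemma class_conj C x g : C \in classes G -> x \in C -> g \in G -> x ^ g \in C.
Proof.
move=> /imsetP[y yG ->] xC gG.
by rewrite -(class_eqP xC) memJ_class.
Qed.

Lemma good_conj s t g : class_vector G s -> good s t -> g \in G ->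
  good s (map (conjg^~ g) t).
Proof.
move=> cv [e m gn p] gG; split.
- by rewrite size_map.
- move=> i Hi; rewrite (nth_map 1) ?e //; apply: class_conj (m i Hi) gG.
  by have /allP/(_ _ (mem_nth set0 Hi))/andP[] := cv.
- have -> : [set x in map (conjg^~ g) t] = [set x in t] :^ g.
    apply/setP=> y; rewrite inE mem_conjg inE.
    apply/mapP/idP => [[x xt ->]|yt]; first by rewrite conjgK.
    by exists (y ^ g^-1) => //; rewrite conjgKV.
  by rewrite genJ gn conjGid.
- rewrite big_map -(big_morph (conjg^~ g) (fun x y => conjMg x y g) (conj1g g)).
  by rewrite p conj1g.
Qed.

Lemma conj_inj t g h : <<[set x in t]>> = G -> 'Z(G) = 1 -> g \in G -> h \in G ->
  map (conjg^~ g) t = map (conjg^~ h) t -> g = h.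
Proof.
move=> gn Z1 gG hG /eq_in_map E.
apply/eqP; rewrite eq_mulgV1; apply/eqP.
suff: g * h^-1 \in 'Z(G) by rewrite Z1 => /set1gP.
rewrite /center inE groupM ?groupV //= -gn cent_gen; apply/centP=> x; rewrite inE => xt.
apply/commute_sym/commgP/conjg_fixP.
by rewrite conjgM E // conjgK.
Qed.


Definition ofs n (t : seq gT) : {ffun 'I_n -> gT} := [ffun i : 'I_n => nth 1 t i].

Lemma good_Ei s t : good s t -> ofs (size s) t \in Ei G s.
Proof.
case=> e m gn p; rewrite inE; apply/and3P; split.
- by apply/forallP=> i; rewrite ffunE; apply: m.
- rewrite -gn; apply/eqP; congr <<_>>; apply/setP=> x; rewrite inE.
  apply/imsetP/idP => [[i _ ->]|xt]; first by rewrite ffunE mem_nth ?e.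
  have Hi : (index x t < size s)%N by rewrite -e index_mem.
  by exists (Ordinal Hi) => //; rewrite ffunE nth_index.
- apply/eqP; rewrite -[RHS]p (big_nth 1) big_mkord e; apply: eq_bigr => i _.
  by rewrite ffunE.
Qed.

Lemma Ei_good s sg : sg \in Ei G s -> good s [seq sg i | i <- enum 'I_(size s)].
Proof.
rewrite inE => /and3P[/forallP m /eqP gn /eqP p]; split.
- by rewrite size_map size_enum_ord.
- move=> i Hi; rewrite (nth_map (Ordinal Hi)) ?size_enum_ord //.
  have -> : nth (Ordinal Hi) (enum 'I_(size s)) i = Ordinal Hi.
    by apply/val_inj; rewrite /= -[i]/(nat_of_ord (Ordinal Hi)) nth_ord_enum.
  exact: m.
- rewrite -gn; congr <<_>>; apply/setP=> x; rewrite inE.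
  apply/mapP/imsetP => [[i _ ->]|[i _ ->]]; first by exists i.
  by exists i; rewrite ?mem_enum.
- by rewrite big_map -[RHS]p [index_enum _]unlock -enumT.
Qed.

Lemma card_Ei s L : uniq L -> (forall t, t \in L -> good s t) -> (size L <= #|Ei G s|)%N.
Proof.
move=> uL gL.
rewrite -(size_map (ofs (size s))) cardE; apply: uniq_leq_size.
  rewrite map_inj_in_uniq // => t1 t2 /gL [e1 _ _ _] /gL [e2 _ _ _] E.
  apply: (@eq_from_nth _ 1); first by rewrite e1 e2.
  move=> i Hi; rewrite e1 in Hi.
  by have := congr1 (fun f : {ffun _ -> gT} => f (Ordinal Hi)) E; rewrite !ffunE.
by move=> f /mapP[t /gL gt ->]; rewrite mem_enum good_Ei.
Qed.

Lemma Ei_li s : (#|Ei G s| <= l_i G s * #|G|)%N.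
Proof.
have sub : Ei G s \subset cover (Sigma_i G s).
  apply/subsetP=> sg Hsg; apply/bigcupP; exists [set tconj sg g | g in G].
    by apply: imset_f.
  apply/imsetP; exists 1 => //; apply/ffunP=> j; by rewrite ffunE conjg1.
apply: leq_trans (subset_leq_card sub) _.
apply: leq_trans (leq_card_cover _) _.
rewrite /l_i -sum1_card big_distrl /=.
apply: leq_sum => B /imsetP[sg _ ->]; rewrite mul1n; exact: leq_imset_card.
Qed.


Section Main.
Variables (n0 : nat) (n0_gt0 : (0 < n0)%N).
Hypothesis hyp : forall s : seq {set gT}, class_vector G s ->
       (n0 <= size s < 2 * n0)%N -> (1 <= l_i G s)%N.
Hypothesis Z1 : 'Z(G) = 1.

Lemma hyp_good s : class_vector G s -> (n0 <= size s < 2 * n0)%N -> exists t, good s t.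
Proof.
move=> cv sz; have := hyp cv sz; rewrite /l_i card_gt0 => /set0Pn [B /imsetP[sg Hsg _]].
by eexists; exact: Ei_good Hsg.
Qed.

Lemma cv_split s k : class_vector G s ->
  class_vector G (take k s) /\ class_vector G (drop k s).
Proof. by rewrite -{1}(cat_take_drop k s) /class_vector all_cat => /andP. Qed.

Lemma exists_good s : class_vector G s -> (n0 <= size s)%N -> exists t, good s t.
Proof.
have [m Hm] := ubnP (size s); elim: m s Hm => // m IH s Hs cv Hn0.
case: (ltnP (size s) (2 * n0)) => Hlt; first by apply: hyp_good => //; apply/andP.
have [cv1 cv2] := cv_split (size s - n0) cv.
have [t1 g1] : exists t, good (take (size s - n0) s) t.
  apply: IH cv1 _; rewrite size_takel ?leq_subr //; lia.
have [t2 g2] : exists t, good (drop (size s - n0) s) t.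
  apply: hyp_good cv2 _; rewrite size_drop; apply/andP; split; lia.
by exists (t1 ++ t2); rewrite -(cat_take_drop (size s - n0) s); apply: good_cat.
Qed.

Lemma many_good k s : class_vector G s -> (k.+1 * n0 <= size s)%N ->
  exists L, [/\ uniq L, forall t, t \in L -> good s t & (#|G| ^ k <= size L)%N].
Proof.
elim: k s => [|k IH] s cv Hs.
  rewrite mul1n in Hs; have [t gt] := exists_good cv Hs.
  by exists [:: t]; split => // x; rewrite inE => /eqP ->.
have [cv1 cv2] := cv_split (size s - n0) cv.
have Hs1 : (k.+1 * n0 <= size (take (size s - n0) s))%N.
  by rewrite size_takel ?leq_subr //; lia.
have [L1 [u1 g1 c1]] := IH _ cv1 Hs1.
have [t2 [e2 m2 gn2 p2]] : exists t, good (drop (size s - n0) s) t.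
  apply: hyp_good cv2 _; rewrite size_drop; apply/andP; split; lia.
exists [seq t1 ++ map (conjg^~ g) t2 | t1 <- L1, g <- enum G]; split.
- apply: allpairs_uniq => //; first exact: enum_uniq.
  move=> [a g] [b h] /allpairsP[[a' g'] [Ha Hg [-> ->]]] /allpairsP[[b' h'] [Hb Hh [-> ->]]] /=.
  move=> /eqP; rewrite eqseq_cat; last first.
    by have [-> _ _ _] := g1 _ Ha; have [-> _ _ _] := g1 _ Hb.
  case/andP=> /eqP -> /eqP E; congr pair.
  by apply: (conj_inj gn2 Z1 _ _ E); rewrite -mem_enum.
- move=> x /allpairsP[[a g] [Ha Hg ->]] /=.
  rewrite -(cat_take_drop (size s - n0) s); apply: good_cat; first exact: g1.
  by apply: good_conj => //; rewrite -mem_enum.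
- rewrite size_allpairs -cardE expnS mulnC leq_mul2r c1 orbT //.
Qed.

End Main.
End S.

End Helpers.

Theorem corollary9 (gT : finGroupType) (G : {group gT}) :
  'Z(G) = 1 ->
  (exists n0 : nat, (3 <= n0)%N /\
     forall s : seq {set gT}, class_vector G s ->
       (n0 <= size s < 2 * n0)%N -> (1 <= l_i G s)%N) ->
  (* the set of class vectors with l^i = 0 is finite *)
  (exists L : seq (seq {set gT}),
     forall s, class_vector G s -> l_i G s = 0%N -> s \in L) /\
  (* l^i tends to infinity along every sequence of class vectors whose
     lengths tend to infinity *)
  (forall v : nat -> seq {set gT},
     (forall k, class_vector G (v k)) ->
     (forall B, exists N, forall k, (N <= k)%N -> (B <= size (v k))%N) ->
     forall B, exists N, forall k, (N <= k)%N -> (B <= l_i G (v k))%N).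
Proof.
move=> Z1 [n0 [Hn0 hyp]].
have n0_gt0 : (0 < n0)%N by lia.
have li_pos : forall s, class_vector G s -> (n0 <= size s)%N -> (1 <= l_i G s)%N.
  move=> s cv Hs; have [t gt] := exists_good n0_gt0 hyp cv Hs.
  have le := Ei_li G s.
  have pos : (0 < #|Ei G s|)%N by apply/card_gt0P; eexists; exact: good_Ei gt.
  rewrite lt0n; apply/eqP => E; rewrite E mul0n in le; lia.
split.
  exists (flatten [seq [seq tval t | t <- enum {: k.-tuple {set gT}}] | k <- iota 0 n0]).
  move=> s cv l0.
  have Hs : (size s < n0)%N.
    by rewrite ltnNge; apply/negP => H; have := li_pos s cv H; rewrite l0.
  apply/flatten_mapP; exists (size s); first by rewrite mem_iota.
  by apply/mapP; exists (in_tuple s) => //; rewrite mem_enum.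
move=> v cvv szv B.
have G1 : (1 < #|G|)%N.
  have [N0 HN0] := szv 1%N; have := HN0 N0 (leqnn _); have := cvv N0.
  case: (v N0) => // C s' /= /andP[/andP[/imsetP[x xG ->] nt] _] _.
  rewrite cardG_gt1; apply: contra nt => /eqP G1.
  by move: xG; rewrite G1 => /set1gP ->; rewrite class1G.
have [N HN] := szv (B.+2 * n0)%N; exists N => k Hk.
have [L [uL gL cL]] := many_good n0_gt0 hyp Z1 (k:=B.+1) (cvv k) (HN k Hk).
have c1 := card_Ei uL gL; have c2 := Ei_li G (v k).
have : (#|G| ^ B * #|G| <= l_i G (v k) * #|G|)%N.
  by rewrite -expnSr (leq_trans cL) // (leq_trans c1).
rewrite leq_pmul2r ?(ltnW G1) // => H.
exact: leq_trans (ltnW (ltn_expl _ G1)) H.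
Qed.
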